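(* Let $n\ge k\ge1$, let $w,u:[n]^{(k)}\to\mathbb{R}$, and let $\tau^i=(x_iy_i)$, $i\in I$, be transpositions of $[n]$ such that the pairs $\{x_i,y_i\}$, $i\in I$, are pairwise disjoint. For $J\subseteq I$ let $\tau^J$ be the product of the $\tau^j$, $j\in J$; for $i\in I$ let $\delta(i)=\langle w,u\rangle-\langle w_{\tau^i},u\rangle$, and let $\delta(I)=\sum_{i\in I}\delta(i)$. Let $p\in[0,1]$ and let $J$ be a random subset of $I$ in which each $i\in I$ is included independently with probability $p$. Then $\mathbb{E}(\langle w,u\rangle-\langle w_{\tau^J},u\rangle)$ can be written as a polynomial in $p$ of the form $$\delta(I)p+\sum_{i=2}^kA_ip^i$$ for some real numbers $A_2,\dots,A_k$ (not depending on $p$).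
   Context: $[n]^{(k)}$ is the family of $k$-subsets of $[n]$; $\langle w,u\rangle=\sum_e w(e)u(e)$; $w_\pi(e)=w(\pi^{-1}(e))$ for a permutation $\pi$ of $[n]$. *)

(* Defs.v *)
From HB Require Import structures.
From mathcomp Require Import all_boot all_order all_algebra all_fingroup.
From mathcomp Require Import reals.
Set Implicit Arguments. Unset Strict Implicit. Unset Printing Implicit Defensive.
Import Order.TTheory GRing.Theory Num.Theory.
Local Open Scope ring_scope.

(* Functions on [n]^(k) are represented as functions on {set 'I_n};
   only their values on k-subsets matter. *)

Definition inner (R : realType) (n k : nat) (w u : {set 'I_n} -> R) : R :=
  \sum_(e : {set 'I_n} | #|e| == k) w e * u e.

Definition permw (R : realType) (n : nat) (w : {set 'I_n} -> R)
  (pi : {perm 'I_n}) : {set 'I_n} -> R :=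
  fun e => w ((pi^-1)%g @: e).

Definition tauJ (I : finType) (n : nat) (x y : I -> 'I_n) (J : {set I})
  : {perm 'I_n} :=
  (\prod_(j in J) tperm (x j) (y j))%g.

Definition delta (R : realType) (I : finType) (n k : nat)
  (w u : {set 'I_n} -> R) (x y : I -> 'I_n) (i : I) : R :=
  inner k w u - inner k (permw w (tperm (x i) (y i))) u.

(* E(<w,u> - <w_{tau^J},u>) where J contains each i independently w.p. p *)
Definition expected_diff (R : realType) (I : finType) (n k : nat)
  (w u : {set 'I_n} -> R) (x y : I -> 'I_n) (p : R) : R :=
  \sum_(J : {set I})
     p ^+ #|J| * (1 - p) ^+ (#|I| - #|J|)%N *
     (inner k w u - inner k (permw w (tauJ x y J)) u).

(* Main.v *)
Require Import Defs.
From HB Require Import structures.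
From mathcomp Require Import all_boot all_order all_algebra all_fingroup.
From mathcomp Require Import reals.
From mathcomp Require Import ring lra.
Import Order.TTheory GRing.Theory Num.Theory.
Local Open Scope ring_scope.
Set Implicit Arguments. Unset Strict Implicit. Unset Printing Implicit Defensive.

Definition tog (I : finType) (i : I) (L : {set I}) : {set I} :=
  if i \in L then L :\ i else i |: L.

Lemma togK (I : finType) (i : I) : involutive (tog i).
Proof.
move=> L; rewrite /tog; case: (boolP (i \in L)) => iL.
  by rewrite !inE eqxx /= setD1K.
by rewrite setU11 setU1K.
Qed.

Lemma tog_sub (I : finType) (i : I) (K L : {set I}) :
  i \in K -> (tog i L \subset K) = (L \subset K).
Proof.
move=> iK; rewrite /tog; case: ifP => iL; apply/subsetP/subsetP => H z;
  move: (H z); rewrite !inE.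
- by case: (eqVneq z i) => [->|] //= _ ->.
- by move=> Hz /andP[_ /Hz].
- by move=> Hz zL; apply: Hz; rewrite zL orbT.
- by case: (eqVneq z i) => [->|] //= Hz /Hz.
Qed.

Lemma tog_sign (R : realType) (I : finType) (i : I) (K L : {set I}) :
  i \in K -> L \subset K ->
  (-1) ^+ #|K :\: tog i L| = - ((-1) ^+ #|K :\: L|) :> R.
Proof.
move=> iK LK; rewrite /tog; case: ifP => iL.
  have -> : K :\: L = (K :\: (L :\ i)) :\ i.
    apply/setP => z; rewrite !inE; case: (eqVneq z i) => [->|] //=.
    by rewrite iL.
  rewrite [in LHS](cardsD1 i (K :\: (L :\ i))) !inE eqxx iK /=.
  by rewrite add1n exprS mulN1r.
have -> : K :\: (i |: L) = (K :\: L) :\ i.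
  by apply/setP => z; rewrite !inE; case: (eqVneq z i).
rewrite [in RHS](cardsD1 i (K :\: L)) inE iL iK /=. rewrite add1n exprS mulN1r opprK. by [].
Qed.

Lemma toggle_zero (R : realType) (I : finType) (K : {set I}) (i : I)
  (F : {set I} -> R) :
  i \in K -> (forall L, F (tog i L) = F L) ->
  \sum_(L : {set I} | L \subset K) (-1) ^+ #|K :\: L| * F L = 0.
Proof.
move=> iK HF.
set S := (X in X = 0).
have : S = - S.
  rewrite {1}/S (reindex_inj (can_inj (togK i))) /=.
  rewrite -sumrN; apply: eq_big => [L|L LK]; first by rewrite tog_sub.
  have LK2 : L \subset K by rewrite -(tog_sub L iK).
  rewrite HF tog_sign //; lra.
lra.
Qed.

Section Perms.
Variables (n : nat) (I : finType) (x y : I -> 'I_n).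
Hypothesis Hdis : forall i j, i != j -> [disjoint [set x i; y i] & [set x j; y j]].

Lemma dis_x i j : i != j -> (x i == x j) || (x i == y j) = false.
Proof.
move=> ij; have H : x i \in [set x i; y i] by rewrite !inE eqxx.
by have := disjointFr (Hdis ij) H; rewrite !inE.
Qed.

Lemma dis_y i j : i != j -> (y i == x j) || (y i == y j) = false.
Proof.
move=> ij; have H : y i \in [set x i; y i] by rewrite !inE eqxx orbT.
by have := disjointFr (Hdis ij) H; rewrite !inE.
Qed.

Implicit Types (L : {set I}) (z : 'I_n).

Definition tp (j : I) : {perm 'I_n} := tperm (x j) (y j).

Lemma prod_seq (s : seq I) : uniq s ->
  [/\ forall j, j \in s -> (\prod_(j0 <- s) tp j0)%g (x j) = y j,
      forall j, j \in s -> (\prod_(j0 <- s) tp j0)%g (y j) = x j &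
      forall z, (forall j, j \in s -> (z != x j) && (z != y j)) ->
         (\prod_(j0 <- s) tp j0)%g z = z].
Proof.
elim: s => [|a s IH] /=.
  by split => // z _; rewrite big_nil perm1.
case/andP => aS /IH [IH1 IH2 IH3].
have fr j : j \in s -> j != a.
  by move=> js; apply: contraNneq aS => <-.
split.
- move=> j; rewrite in_cons big_cons permM; case/orP => [/eqP->|js].
    rewrite /tp tpermL IH3 // => j' j's.
    by rewrite -negb_or dis_y // eq_sym fr.
  have /negbT/norP[h1 h2] := dis_x (fr j js).
  by rewrite /tp tpermD ?IH1 // eq_sym.
- move=> j; rewrite in_cons big_cons permM; case/orP => [/eqP->|js].
    rewrite /tp tpermR IH3 // => j' j's.
    by rewrite -negb_or dis_x // eq_sym fr.
  have /negbT/norP[h1 h2] := dis_y (fr j js).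
  by rewrite /tp tpermD ?IH2 // eq_sym.
- move=> z Hz; rewrite big_cons permM.
  have /andP[za1 za2] := Hz a (mem_head a s).
  rewrite /tp tpermD 1?eq_sym // IH3 // => j js.
  by apply: Hz; rewrite in_cons js orbT.
Qed.

Definition tauL (L : {set I}) : {perm 'I_n} := tauJ x y L.

Definition sq (L : {set I}) := [seq j <- index_enum I | j \in L].
Lemma sq_uniq L : uniq (sq L).
Proof. by rewrite filter_uniq // index_enum_uniq. Qed.
Lemma mem_sq L j : (j \in sq L) = (j \in L).
Proof. by rewrite mem_filter mem_index_enum andbT. Qed.
Lemma tauE L : tauL L = (\prod_(j0 <- sq L) tp j0)%g.
Proof. by rewrite /tauL /tauJ big_filter. Qed.

Lemma tau1 L j : j \in L -> tauL L (x j) = y j.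
Proof. by move=> jL; rewrite tauE; case: (prod_seq (sq_uniq L)) => H _ _; rewrite H ?mem_sq. Qed.
Lemma tau2 L j : j \in L -> tauL L (y j) = x j.
Proof. by move=> jL; rewrite tauE; case: (prod_seq (sq_uniq L)) => _ H _; rewrite H ?mem_sq. Qed.
Lemma tau3 L z : (forall j, j \in L -> (z != x j) && (z != y j)) -> tauL L z = z.
Proof.
move=> Hz; rewrite tauE; case: (prod_seq (sq_uniq L)) => _ _ H; apply: H.
by move=> j; rewrite mem_sq; apply: Hz.
Qed.

Lemma tau_invol L z : tauL L (tauL L z) = z.
Proof.
case: (boolP [exists j, (j \in L) && ((z == x j) || (z == y j))]).
  case/existsP => j /andP[jL /orP[/eqP->|/eqP->]].
    by rewrite tau1 // tau2.
  by rewrite tau2 // tau1.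
move/existsPn => H.
have Hz : forall j, j \in L -> (z != x j) && (z != y j).
  by move=> j jL; have := H j; rewrite jL /= negb_or.
by rewrite !tau3.
Qed.

Lemma tau_inv L z : ((tauL L)^-1)%g z = tauL L z.
Proof. by apply: (@perm_inj _ (tauL L)); rewrite permKV tau_invol. Qed.

Lemma tau_tog L i z : z != x i -> z != y i -> tauL (tog i L) z = tauL L z.
Proof.
move=> zx zy.
have mem j : j != i -> (j \in tog i L) = (j \in L).
  by move=> ji; rewrite /tog; case: ifP => _; rewrite !inE (negbTE ji).
case: (boolP [exists j, (j \in L) && ((z == x j) || (z == y j))]).
  case/existsP => j /andP[jL Hj].
  have ji : j != i.
    apply/eqP => ji; subst j.
    by case/orP: Hj => /eqP zz; [move: zx|move: zy]; rewrite zz eqxx.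
  have jL' : j \in tog i L by rewrite mem.
  by case/orP: Hj => /eqP->; rewrite ?tau1 ?tau2.
move/existsPn => H.
have Hz : forall j, j \in L -> (z != x j) && (z != y j).
  by move=> j jL; have := H j; rewrite jL /= negb_or.
rewrite (tau3 Hz) tau3 // => j.
case: (eqVneq j i) => [->|ji]; first by rewrite zx zy.
by rewrite mem //; apply: Hz.
Qed.

End Perms.

Lemma Csum (R : realType) (I : finType) (L : {set I}) (p : R) :
  \sum_(K : {set I} | L \subset K) p ^+ #|K| * (-1) ^+ #|K :\: L|
  = p ^+ #|L| * (1 - p) ^+ (#|I| - #|L|).
Proof.
pose F i := if i \in L then p else - p.
pose G i := if i \in L then 0 else 1 : R.
have E : \prod_i (F i + G i) =
    \sum_(J : {set I}) \prod_i (if i \in J then F i else G i).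
  by rewrite (bigA_distr _ _ F G).
have LHS : \prod_i (F i + G i) = p ^+ #|L| * (1 - p) ^+ (#|I| - #|L|).
  rewrite (bigID (mem L)) /=; congr (_ * _).
    rewrite (eq_bigr (fun _ => p)); last by move=> i iL; rewrite /F /G iL addr0.
    by rewrite prodr_const.
  rewrite (eq_bigl (fun i => i \in ~: L)); last by move=> i; rewrite inE.
  rewrite (eq_bigr (fun _ => 1 - p)); last first.
    by move=> i; rewrite inE => /negbTE iL; rewrite /F /G iL addrC.
  by rewrite prodr_const -(cardsC L) addKn.
rewrite -LHS E [RHS](bigID (fun K : {set I} => L \subset K)) /=.
rewrite [X in _ = _ + X]big1 ?addr0; last first.
  move=> K /subsetPn [i iL iK].
  by rewrite (bigD1 i) //= (negbTE iK) /G iL mul0r.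
apply: eq_big => // K LK.
rewrite (bigID (mem K)) /=.
rewrite [X in _ = _ * X]big1 ?mulr1; last first.
  move=> i iK; rewrite (negbTE iK) /G.
  by have /negbTE -> : i \notin L by apply: contra iK; apply: (subsetP LK).
rewrite (eq_bigr F); last by move=> i ->.
rewrite (bigID (mem L)) /=.
rewrite (eq_bigl (fun i => i \in K :&: L)); last by move=> i; rewrite inE.
rewrite (eq_bigr (fun _ => p)); last by move=> i; rewrite inE => /andP[_ iL]; rewrite /F iL.
rewrite prodr_const.
rewrite (eq_bigl (fun i => i \in K :\: L)); last by move=> i; rewrite inE andbC.
rewrite (eq_bigr (fun _ => - p)); last first.
  by move=> i; rewrite inE => /andP[/negbTE iL _]; rewrite /F iL.
rewrite prodr_const exprNn -(cardsID L K) exprD.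
have -> : K :&: L = L by apply/setIidPr.
rewrite [(- p) ^+ _]exprNn expr1n mulr1.
move: (p ^+ #|L|) (p ^+ #|K :\: L|) ((-1) ^+ #|K :\: L| : R) => a c d; ring.
Qed.

Section Main.
Variables (R : realType) (n k : nat) (I : finType) (w u : {set 'I_n} -> R) (x y : I -> 'I_n).
Hypothesis Hdis : forall i j, i != j -> [disjoint [set x i; y i] & [set x j; y j]].

Definition gg (L : {set I}) : R := inner k w u - inner k (permw w (tauJ x y L)) u.
Definition hh (K : {set I}) : R :=
  \sum_(L : {set I} | L \subset K) (-1) ^+ #|K :\: L| * gg L.

Lemma exists_free (e : {set 'I_n}) (K : {set I}) : (#|e| < #|K|)%N ->
  exists2 i, i \in K & (x i \notin e) && (y i \notin e).
Proof.
move=> lt.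
case: (boolP [exists i in K, (x i \notin e) && (y i \notin e)]) =>
  [/exists_inP[i iK Hi]|/exists_inPn H]; first by exists i.
pose f i := if x i \in e then x i else y i.
have fe : f @: K \subset e.
  apply/subsetP => z /imsetP[i iK ->]; rewrite /f; case: ifP => // xe.
  by have := H i iK; rewrite xe /= negbK.
have finj : {in K &, injective f}.
  move=> i j _ _; case: (eqVneq i j) => // ij.
  have /negbT/norP[a1 a2] := dis_x Hdis ij.
  have /negbT/norP[b1 b2] := dis_y Hdis ij.
  rewrite /f; case: ifP => _; case: ifP => _ /eqP;
    by rewrite ?(negbTE a1) ?(negbTE a2) ?(negbTE b1) ?(negbTE b2).
have := subset_leq_card fe; rewrite card_in_imset // => le.
by move: (leq_trans lt le); rewrite ltnn.
Qed.

Lemma h_big (K : {set I}) : (k < #|K|)%N -> hh K = 0.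
Proof.
move=> kK.
have [i iK] : exists i, i \in K.
  by apply/set0Pn; rewrite -card_gt0; apply: leq_ltn_trans kK.
rewrite /hh /gg.
under eq_bigr do rewrite mulrBr.
rewrite sumrB (toggle_zero (F := fun _ => inner k w u) iK) // sub0r.
rewrite /inner.
under eq_bigr do rewrite big_distrr.
rewrite exchange_big /= big1 ?oppr0 // => e /eqP ek.
have lt : (#|e| < #|K|)%N by rewrite ek.
have [j jK /andP[xj yj]] := exists_free lt.
under eq_bigr do rewrite mulrA.
rewrite -big_distrl /= (toggle_zero (F := fun L => permw w (tauJ x y L) e) jK) ?mul0r //.
move=> L; rewrite /permw; congr (w _); apply: eq_in_imset => z ze.
have zx : z != x j by apply: contraNneq xj => <-.
have zy : z != y j by apply: contraNneq yj => <-.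
by rewrite !(tau_inv Hdis) (tau_tog Hdis).
Qed.

Lemma g0 : gg set0 = 0.
Proof.
rewrite /gg /tauJ big_set0; apply/eqP; rewrite subr_eq0; apply/eqP.
apply: eq_bigr => e _; rewrite /permw invg1.
by rewrite (eq_imset _ (@perm1 _)) imset_id.
Qed.

Lemma h0 : hh set0 = 0.
Proof.
rewrite /hh (eq_bigl (fun L => L == set0)) => [|L]; last by rewrite subset0.
by rewrite big_pred1_eq g0 mulr0.
Qed.

Lemma h1 i : hh [set i] = delta k w u x y i.
Proof.
rewrite /hh (eq_bigl (fun L => (L == [set i]) || (L == set0))) => [|L];
  last by rewrite subset1.
rewrite (bigD1 [set i]) ?eqxx //= (eq_bigl (fun L => L == set0)) => [|L]; last first.
  case: (eqVneq L set0) => [->|ne]; last by rewrite orbF; case: eqP.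
  rewrite orbT /=; apply/eqP => h.
  by have := cards1 i; rewrite -h cards0.
rewrite big_pred1_eq g0 mulr0 addr0 setDv cards0 expr0 mul1r.
by rewrite /gg /tauJ big_set1.
Qed.

Lemma E1 p : expected_diff k w u x y p = \sum_(K : {set I}) p ^+ #|K| * hh K.
Proof.
rewrite /hh; under [RHS]eq_bigr do rewrite big_distrr.
rewrite (exchange_big_dep predT) //=.
apply: eq_bigr => L _.
rewrite -Csum big_distrl /=; apply: eq_big => [K|K LK] //.
by rewrite /gg mulrA.
Qed.

End Main.

Unset Implicit Arguments.
Set Strict Implicit.

Theorem lemma4p4 (R : realType) (n k : nat) (I : finType)
  (w u : {set 'I_n} -> R) (x y : I -> 'I_n) :
  (1 <= k)%N -> (k <= n)%N ->
  (forall i, x i != y i) ->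
  (forall i j, i != j -> [disjoint [set x i; y i] & [set x j; y j]]) ->
  exists A : nat -> R, forall p : R, 0 <= p -> p <= 1 ->
    expected_diff k w u x y p =
      (\sum_(i in I) delta k w u x y i) * p + \sum_(2 <= i < k.+1) A i * p ^+ i.
Proof.
move=> k1 kn Hxy Hdis.
exists (fun i => \sum_(K : {set I} | #|K| == i) hh k w u x y K).
move=> p _ _.
rewrite E1.
set N := maxn k #|I|.
have -> : \sum_(K : {set I}) p ^+ #|K| * hh k w u x y K =
    \sum_(0 <= i < N.+1) (\sum_(K : {set I} | #|K| == i) hh k w u x y K) * p ^+ i.
  under [RHS]eq_bigr do rewrite big_distrl.
  rewrite (exchange_big_dep predT) //=.
  apply: eq_bigr => K _.
  rewrite (eq_bigl (fun i => i == #|K|)) => [|i]; last by rewrite eq_sym.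
  rewrite big_nat1_eq /= ltnS.
  have -> : (#|K| <= N)%N by apply: leq_trans (max_card _) (leq_maxr _ _).
  by rewrite mulrC.
rewrite (@big_cat_nat _ _ _ k.+1) //=; last by rewrite ltnS leq_maxl.
have -> : \sum_(k.+1 <= i < N.+1)
    (\sum_(K : {set I} | #|K| == i) hh k w u x y K) * p ^+ i = 0.
  rewrite big_nat big1 // => i /andP[ki _]; rewrite big1 ?mul0r // => K /eqP Ki.
  by apply: (h_big _ _ Hdis); rewrite Ki.
rewrite addr0.
rewrite (@big_cat_nat _ _ _ 2) //= (@big_cat_nat _ _ _ 1) //= !big_nat1.
rewrite (eq_bigl (fun K => K == set0)) => [|K]; last by rewrite cards_eq0.
rewrite big_pred1_eq h0 mul0r add0r expr1 big_cards1.
by under eq_bigr do rewrite h1.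
Qed.
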